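(* In the setting below, for every nonempty $A\subseteq[n]$: $\Pr_{\psi\sim\Psi}(E_1(\psi)\wedge E_2(\psi)\wedge\neg E_3(\psi))\le 2^{-6}$.
   Context: $[N]:=\{0,\dots,N-1\}$. Fix integers $n\ge1$ and real $0<\varepsilon<1$. Let $b:=2^{\lceil\log_2(9\cdot 2^{23}\varepsilon^{-2})\rceil}$ and $k:=\lceil\tfrac{15}{2}\ln b+16\rceil$. Hash families: for $d\ge1$, identify $[2^d]$ with $\mathrm{GF}(2^d)$ via binary representation. For $k'\ge1$, $N\le 2^d$, $c\le d$, $\mathcal H_{k'}([N],[2^c])$ is the uniform distribution over tuples $(a_0,\dots,a_{k'-1})\in\mathrm{GF}(2^d)^{k'}$, each giving $x\mapsto(\sum_ia_ix^i)\bmod 2^c$ on $[N]$; $\mathcal G_{k'}([N])$ is uniform over the same tuples giving $x\mapsto\mathrm{tz}(\sum_ia_ix^i)$, $\mathrm{tz}(y)$ = number of trailing zeros of the $d$-bit representation of $y$ ($\mathrm{tz}(0)=d$). Here $d$ is a fixed integer with $2^d\ge N$, $d\ge c$. $\Psi:=\mathcal G_2([n])\times\mathcal H_2([n],[2^5b^2])\times\mathcal H_k([2^5b^2],[b])$ with the uniform product distribution; $\psi=(f,g,h)$. For fixed nonempty $A\subseteq[n]$: $t(f):=\max_{a\in A}f(a)-\log_2b+9$; $s(f):=\max(0,t(f))$; $R(f):=\{a\in A: f(a)\ge s(f)\}$. Events: $E_1(\psi)$: $2^{-16}b\le 2^{-t(f)}|A|\le 2^{-1}b$; $E_2(\psi)$: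 $\big||R(f)|-2^{-s(f)}|A|\big|\le\frac{\varepsilon}{3}2^{-s(f)}|A|$; $E_3(\psi)$: $g(a)\ne g(a')$ for all distinct $a,a'\in R(f)$. *)

(* Defs.v *)
From HB Require Import structures.
From mathcomp Require Import all_boot all_order all_algebra.
From mathcomp Require Import reals exp.
Set Implicit Arguments. Unset Strict Implicit. Unset Printing Implicit Defensive.
Import Order.TTheory GRing.Theory Num.Theory.
Local Open Scope ring_scope.

(* bexp eps = ceil(log2(9 * 2^23 * eps^-2)) (a positive integer for 0<eps<1) *)
Definition bexp (R : realType) (eps : R) : nat :=
  `| Num.ceil (ln (9 * 2 ^+ 23 / eps ^+ 2) / ln 2) |%N.
Definition bpar (R : realType) (eps : R) : nat := (2 ^ bexp eps)%N.
Definition kpar (R : realType) (eps : R) : nat :=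
  `| Num.ceil (15 / 2 * ln ((bpar eps)%:R : R) + 16) |%N.

(* the integer x in [2^d] as the polynomial whose coefficients are its binary digits *)
Definition bitpoly (d x : nat) : {poly 'F_2} := \poly_(i < d) ((odd (x %/ 2 ^ i))%:R).
Definition bits2nat (d : nat) (y : {poly 'F_2}) : nat :=
  (\sum_(i < d) nat_of_ord (nth 0%R (polyseq y) i) * 2 ^ i)%N.
(* x |-> sum_i a_i x^i computed in GF(2^d) = F_2[X]/(p), p irreducible of degree d,
   returned as the d-bit integer *)
Definition gfeval (d : nat) (p : {poly 'F_2}) (m : nat) (a : {ffun 'I_m -> 'I_(2 ^ d)})
  (x : nat) : nat :=
  bits2nat d (modp (\sum_(i < m) bitpoly d (a i) * bitpoly d x ^+ i) p).
(* number of trailing zeros of the d-bit representation of y (= d for y = 0) *)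
Definition tz (d y : nat) : nat := (\max_(j < d.+1 | 2 ^ j %| y) j)%N.

(* H_m-functions: x |-> (poly) mod 2^c ; G_m-functions: x |-> tz(poly) *)
Definition hfun (d : nat) (p : {poly 'F_2}) (m c : nat) (a : {ffun 'I_m -> 'I_(2 ^ d)})
  (x : nat) : nat := (gfeval p a x %% 2 ^ c)%N.
Definition gfun (d : nat) (p : {poly 'F_2}) (m : nat) (a : {ffun 'I_m -> 'I_(2 ^ d)})
  (x : nat) : nat := tz d (gfeval p a x).

Definition tval (n : nat) (A : {set 'I_n}) (f : nat -> nat) (be : nat) : int :=
  ((\max_(a in A) f (val a))%N)%:Z - be%:Z + 9.
Definition sval (n : nat) (A : {set 'I_n}) (f : nat -> nat) (be : nat) : int :=
  Num.max 0 (tval A f be).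
Definition Rset (n : nat) (A : {set 'I_n}) (f : nat -> nat) (be : nat) : {set 'I_n} :=
  [set a in A | sval A f be <= (f (val a))%:Z].

(* ---------- events (here b = 2^be, so log2 b = be) ---------- *)
Definition E1 (R : realType) (n : nat) (A : {set 'I_n}) (f : nat -> nat) (be : nat) : bool :=
  ((2 : R) ^ (- 16%:Z) * (2 ^ be)%N%:R <= (2 : R) ^ (- tval A f be) * #|A|%:R)
  && ((2 : R) ^ (- tval A f be) * #|A|%:R <= (2 : R) ^ (- 1%:Z) * (2 ^ be)%N%:R).
Definition E2 (R : realType) (eps : R) (n : nat) (A : {set 'I_n}) (f : nat -> nat)
  (be : nat) : bool :=
  `| #|Rset A f be|%:R - (2 : R) ^ (- sval A f be) * #|A|%:R |
    <= eps / 3 * ((2 : R) ^ (- sval A f be) * #|A|%:R).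
Definition E3 (n : nat) (A : {set 'I_n}) (f g : nat -> nat) (be : nat) : bool :=
  [forall a in Rset A f be, forall a' in Rset A f be, (a != a') ==> (g (val a) != g (val a'))].

(* ---------- the sample space Psi = G_2([n]) x H_2([n],[2^5 b^2]) x H_k([2^5 b^2],[b]) ---------- *)
Definition Psi (R : realType) (eps : R) (d1 d2 d3 : nat) : finType :=
  ({ffun 'I_2 -> 'I_(2 ^ d1)} * {ffun 'I_2 -> 'I_(2 ^ d2)}
     * {ffun 'I_(kpar eps) -> 'I_(2 ^ d3)})%type.

Definition prob_bad (R : realType) (eps : R) (n : nat) (A : {set 'I_n})
  (d1 d2 d3 : nat) (p1 p2 p3 : {poly 'F_2}) : R :=
  let be := bexp eps in
  let c2 := (5 + 2 * be)%N in
  #|[set psi : Psi eps d1 d2 d3 |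
      let f := gfun p1 psi.1.1 in
      let g := hfun p2 c2 psi.1.2 in
      [&& E1 R A f be, E2 eps A f be & ~~ E3 A f g be]]|%:R
  / #|Psi eps d1 d2 d3|%:R.

(* Main.v *)
Require Import Defs.
From HB Require Import structures.
From mathcomp Require Import all_boot all_order all_algebra.
From mathcomp Require Import reals exp.
From mathcomp Require Import zify ring lra.
Import Order.TTheory GRing.Theory Num.Theory.
Local Open Scope ring_scope.

Definition nb (d : nat) (s : nat -> bool) : nat := (\sum_(i < d) s i * 2 ^ i)%N.

Lemma nb_rec d s : nb d.+1 s = (s 0%N + 2 * nb d (fun i => s i.+1))%N.
Proof.
rewrite /nb big_ord_recl /= expn0 muln1 big_distrr /=; congr (_ + _)%N.
by apply: eq_bigr => i _; rewrite /bump /= expnS mulnCA.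
Qed.

Lemma nb_lt d s : (nb d s < 2 ^ d)%N.
Proof.
elim: d s => [|d IH] s; first by rewrite /nb big_ord0.
rewrite nb_rec expnS; have := IH (fun i => s i.+1); case: (s 0%N) => /=; lia.
Qed.

Lemma nb_inj d s s' : nb d s = nb d s' -> forall i, (i < d)%N -> s i = s' i.
Proof.
elim: d s s' => [|d IH] s s' //; rewrite !nb_rec => H [|i] Hi.
  have := congr1 odd H; rewrite !oddD !addKb /=.
  by case: (s 0%N); case: (s' 0%N).
have H0 : s 0%N = s' 0%N.
  have := congr1 odd H; rewrite !oddD !addKb /=.
  by case: (s 0%N); case: (s' 0%N).
rewrite H0 in H; have H2 : nb d (fun i => s i.+1) = nb d (fun i => s' i.+1) by lia.
exact: (IH _ _ H2 i Hi).
Qed.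

Lemma nb_false d : nb d (fun _ => false) = 0%N.
Proof. by rewrite /nb big1. Qed.

Lemma nb_split c d s : (c <= d)%N ->
  nb d s = (nb c s + 2 ^ c * nb (d - c) (fun i => s (c + i)%N))%N.
Proof.
elim: c d s => [|c IH] d s Hcd.
  by rewrite /nb big_ord0 expn0 mul1n subn0 add0n.
case: d Hcd => [//|d] Hcd; rewrite !nb_rec (IH d) // subSS expnS.
rewrite mulnDr addnA -mulnA; congr (_ + _ * (_ * nb _ _))%N.
Qed.

Lemma nb_mod c d s : (c <= d)%N -> (nb d s %% 2 ^ c)%N = nb c s.
Proof.
move=> Hcd; rewrite (@nb_split c d s Hcd) addnC mulnC modnMDl modn_small //; exact: nb_lt.
Qed.

Lemma F2cases (u : 'F_2) : u = 0 \/ u = 1.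
Proof. case: u => [[|[|k]] Hk]; [left|right|]; try by apply: val_inj. by []. Qed.
Lemma F2nat (u : 'F_2) : nat_of_ord u = (u != 0).
Proof. by case: (F2cases u) => ->. Qed.
Lemma F2b (b : bool) : (b%:R : 'F_2) != 0 = b.
Proof. by case: b. Qed.
Lemma F2eq (u v : 'F_2) : ((u != 0) == (v != 0)) = (u - v == 0).
Proof. by case: (F2cases u) => ->; case: (F2cases v) => ->; rewrite ?subrr ?subr0 ?sub0r ?oppr_eq0 ?oner_eq0 ?eqxx. Qed.

Lemma nb_eq d s s' : (forall i, (i < d)%N -> s i = s' i) -> nb d s = nb d s'.
Proof. by move=> H; apply: eq_bigr => i _; rewrite H. Qed.

Lemma bits2nbE d (y : {poly 'F_2}) : bits2nat d y = nb d (fun i => y`_i != 0).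
Proof. by apply: eq_bigr => i _; rewrite F2nat. Qed.

Lemma nb_odd d x : (x < 2 ^ d)%N -> nb d (fun i => odd (x %/ 2 ^ i)) = x.
Proof.
elim: d x => [|d IH] x Hx; first by rewrite /nb big_ord0; rewrite expn0 in Hx; lia.
rewrite nb_rec expn0 divn1.
rewrite (@nb_eq _ _ (fun i => odd ((x %/ 2) %/ 2 ^ i))); last first.
  by move=> i _; rewrite expnS divnMA.
rewrite IH; last by rewrite ltn_divLR // mulnC -expnS.
rewrite -modn2; lia.
Qed.

Lemma size_bitpoly d x : (size (bitpoly d x) <= d)%N.
Proof. exact: size_poly. Qed.

Lemma bits_bitpoly d x : (x < 2 ^ d)%N -> bits2nat d (bitpoly d x) = x.
Proof.
move=> Hx; rewrite bits2nbE -[in RHS](@nb_odd d x Hx); apply: nb_eq => i Hi.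
by rewrite coef_poly Hi F2b.
Qed.

Lemma bits_inj d (y z : {poly 'F_2}) : (size y <= d)%N -> (size z <= d)%N ->
  bits2nat d y = bits2nat d z -> y = z.
Proof.
move=> Hy Hz; rewrite !bits2nbE => /nb_inj H; apply/polyP => i.
case: (ltnP i d) => Hi.
  have := H i Hi => /=; case: (F2cases y`_i) => ->; case: (F2cases z`_i) => -> //=; rewrite ?eqxx ?oner_eq0 //.
by rewrite !nth_default //; apply: leq_trans Hi.
Qed.

Lemma bits_lt d (y : {poly 'F_2}) : (bits2nat d y < 2 ^ d)%N.
Proof. by rewrite bits2nbE nb_lt. Qed.

Lemma gfeval2 d (p : {poly 'F_2}) (a : {ffun 'I_2 -> 'I_(2 ^ d)%N}) x : size p = d.+1 ->
  gfeval p a x = bits2nat d (bitpoly d (a ord0) + (bitpoly d (a ord_max) * bitpoly d x) %% p).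
Proof.
move=> Hp; rewrite /gfeval big_ord_recl big_ord1 expr0 mulr1 modpD modp_small; last first.
  by rewrite Hp ltnS size_bitpoly.
have -> : lift ord0 ord0 = ord_max :> 'I_2 by apply: val_inj.
by rewrite expr1.
Qed.

Lemma low_eq c (Y Y' : {poly 'F_2}) :
  (nb c (fun i => Y`_i != 0) == nb c (fun i => Y'`_i != 0)) =
  (nb c (fun i => (Y - Y')`_i != 0) == 0%N).
Proof.
apply/eqP/eqP => H.
  apply: (@eq_trans _ _ (nb c (fun _ => false))); last exact: nb_false.
  apply: nb_eq => i Hi; have := @nb_inj _ _ _ H i Hi => /=.
  rewrite coefB; case: (F2cases Y`_i) => ->; case: (F2cases Y'`_i) => -> //=;
    rewrite ?eqxx ?oner_eq0 ?subrr ?eqxx //.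
have {}H : nb c (fun i => (Y - Y')`_i != 0) = nb c (fun _ => false) by rewrite H nb_false.
apply: nb_eq => i Hi; have := @nb_inj _ _ _ H i Hi => /=.
rewrite coefB; case: (F2cases Y`_i) => ->; case: (F2cases Y'`_i) => -> //=;
  rewrite ?eqxx ?oner_eq0 ?subrr ?subr0 ?sub0r ?oppr_eq0 ?oner_eq0 //.
Qed.

Lemma hcoll d c (p : {poly 'F_2}) (a : {ffun 'I_2 -> 'I_(2 ^ d)%N}) x x' :
  (c <= d)%N -> size p = d.+1 ->
  (hfun p c a x == hfun p c a x') =
  (bits2nat d ((bitpoly d (a ord_max) * (bitpoly d x - bitpoly d x')) %% p) %% 2 ^ c == 0)%N.
Proof.
move=> Hc Hp; rewrite /hfun !gfeval2 // !bits2nbE !nb_mod // low_eq.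
by rewrite mulrBr modpD modpN opprD addrACA subrr add0r.
Qed.

Lemma card_mult d c : (c <= d)%N ->
  (#|[set y : 'I_(2 ^ d) | (y %% 2 ^ c == 0)%N]| * 2 ^ c = 2 ^ d)%N.
Proof.
move=> Hcd.
have Hlt : forall k : 'I_(2 ^ (d - c)), (k * 2 ^ c < 2 ^ d)%N.
  move=> k; have -> : (2 ^ d = 2 ^ (d - c) * 2 ^ c)%N by rewrite -expnD subnK.
  by rewrite ltn_pmul2r ?expn_gt0.
pose m (k : 'I_(2 ^ (d - c))) : 'I_(2 ^ d) := Ordinal (Hlt k).
have minj : injective m.
  move=> u v /(congr1 val) /= /eqP; rewrite eqn_pmul2r ?expn_gt0 // => /eqP H.
  exact: val_inj.
have -> : [set y : 'I_(2 ^ d) | (y %% 2 ^ c == 0)%N] = m @: [set: 'I_(2 ^ (d - c))].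
  apply/setP => y; rewrite inE; apply/idP/imsetP.
    move=> Hy; have Hdv : (2 ^ c %| y)%N by rewrite /dvdn.
    have Hk : (y %/ 2 ^ c < 2 ^ (d - c))%N.
      by rewrite ltn_divLR ?expn_gt0 // -expnD subnK.
    exists (Ordinal Hk); first by rewrite inE.
    by apply: val_inj; rewrite /= divnK.
  by case=> k _ ->; rewrite /= modnMl.
by rewrite card_imset // cardsT card_ord -expnD subnK.
Qed.

Lemma card_ffun2 d (Q : pred 'I_(2 ^ d)) :
  #|[set a : {ffun 'I_2 -> 'I_(2 ^ d)} | Q (a ord_max)]| = (2 ^ d * #|[set y | Q y]|)%N.
Proof.
pose e (u : 'I_(2 ^ d) * 'I_(2 ^ d)) : {ffun 'I_2 -> 'I_(2 ^ d)} :=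
  [ffun i : 'I_2 => if val i == 0%N then u.1 else u.2].
have einj : injective e.
  move=> [u1 u2] [v1 v2] H.
  have H1 := congr1 (fun f : {ffun 'I_2 -> 'I_(2 ^ d)} => f ord0) H.
  have H2 := congr1 (fun f : {ffun 'I_2 -> 'I_(2 ^ d)} => f ord_max) H.
  by move: H1 H2; rewrite /= !ffunE /= => -> ->.
have -> : [set a : {ffun 'I_2 -> 'I_(2 ^ d)} | Q (a ord_max)] =
          e @: (setX [set: 'I_(2 ^ d)] [set y | Q y]).
  apply/setP => a; rewrite inE; apply/idP/imsetP.
    move=> Ha; exists (a ord0, a ord_max); first by rewrite !inE.
    apply/ffunP => i; rewrite ffunE; case: i => [[|[|k]] Hk] //=.
      by congr (a _); apply: val_inj.
    by congr (a _); apply: val_inj.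
  by case=> u; rewrite !inE => /andP [_ Hu] ->; rewrite ffunE.
by rewrite card_imset // cardsX cardsT card_ord.
Qed.

Lemma coll_count d c (p : {poly 'F_2}) x x' : (c <= d)%N -> irreducible_poly p ->
  size p = d.+1 -> (x < 2 ^ d)%N -> (x' < 2 ^ d)%N -> x != x' ->
  (#|[set a : {ffun 'I_2 -> 'I_(2 ^ d)} | hfun p c a x == hfun p c a x'] | * 2 ^ c
     = 2 ^ d * 2 ^ d)%N.
Proof.
move=> Hcd Hirr Hp Hx Hx' Hxx.
set D := bitpoly d x - bitpoly d x'.
have Hp0 : p != 0 by rewrite -size_poly_eq0 Hp.
have HDs : (size D <= d)%N.
  by apply: leq_trans (size_polyD _ _) _; rewrite size_polyN geq_max !size_bitpoly.
have HD0 : D != 0.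
  rewrite subr_eq0; apply/eqP => H; move/eqP: Hxx; apply.
  by rewrite -(@bits_bitpoly _ _ Hx) -(@bits_bitpoly _ _ Hx') H.
pose phi (a1 : 'I_(2 ^ d)) : 'I_(2 ^ d) := Ordinal (bits_lt d ((bitpoly d a1 * D) %% p)).
have phiinj : injective phi.
  move=> u v /(congr1 val) /= H.
  have Hsm : forall q : {poly 'F_2}, (size (q %% p)%R <= d)%N.
    by move=> q; rewrite -ltnS -Hp; exact: ltn_modpN0.
  have {}H := @bits_inj _ _ _ (Hsm _) (Hsm _) H.
  have Hdv : p %| (bitpoly d u - bitpoly d v) * D.
    by apply/modp_eq0P; rewrite mulrBl modpD modpN H subrr.
  have Hcop : coprimep p D.
    by rewrite irreducible_poly_coprime // gtNdvdp // Hp ltnS.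
  rewrite Gauss_dvdpl // in Hdv.
  have Hs : (size (bitpoly d u - bitpoly d v)%R < size p)%N.
    rewrite Hp ltnS; apply: leq_trans (size_polyD _ _) _.
    by rewrite size_polyN geq_max !size_bitpoly.
  have : bitpoly d u - bitpoly d v == 0.
    by apply/negPn/negP => Hn; move: Hdv; rewrite gtNdvdp.
  rewrite subr_eq0 => /eqP Huv; apply: val_inj.
  move: (@bits_bitpoly d u (ltn_ord u)) (@bits_bitpoly d v (ltn_ord v)); rewrite Huv => H1 H2.
  exact: (etrans (esym H1) H2).
have -> : [set a : {ffun 'I_2 -> 'I_(2 ^ d)} | hfun p c a x == hfun p c a x'] =
  [set a : {ffun 'I_2 -> 'I_(2 ^ d)} | (fun y => (y %% 2 ^ c == 0)%N) (phi (a ord_max))].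
  by apply/setP => a; rewrite !inE hcoll.
rewrite (card_ffun2 d (fun y => (phi y %% 2 ^ c == 0)%N)) -mulnA; congr (_ * _)%N.
have -> : [set y | (phi y %% 2 ^ c == 0)%N] = phi @^-1: [set y : 'I_(2 ^ d) | (y %% 2 ^ c == 0)%N].
  by apply/setP => y; rewrite !inE.
by rewrite card_preimset // card_mult.
Qed.

Lemma card_bigcup_le (I T : finType) (P : pred I) (F : I -> {set T}) :
  (#|\bigcup_(i | P i) F i| <= \sum_(i | P i) #|F i|)%N.
Proof.
elim/big_rec2: _ => [|i S m Pi IH]; first by rewrite cards0.
apply: leq_trans (leq_card_setU _ _) _; exact: leq_add.
Qed.

Lemma pairs_le n (R : {set 'I_n}) :
  (2 * \sum_(a in R) \sum_(a' | (a' \in R) && (a < a')%N) 1 <= #|R| * #|R|)%N.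
Proof.
have E : forall a : 'I_n, \sum_(a' | (a' \in R) && (a < a')%N) 1 =
                          \sum_(a' in R) ((a < a')%N : nat).
  by move=> a; rewrite big_mkcondr /=; apply: eq_bigr => a' _; case: (a < a')%N.
under eq_bigr => a _ do rewrite E.
have Hs : (\sum_(a in R) \sum_(a' in R) (((a < a')%N : nat) + ((a' < a)%N : nat)) =
  \sum_(a in R) \sum_(a' in R) ((a < a')%N : nat) +
  \sum_(a in R) \sum_(a' in R) ((a' < a)%N : nat))%N.
  by rewrite -big_split; apply: eq_bigr => a _; rewrite big_split.
have Hx : (\sum_(a in R) \sum_(a' in R) ((a' < a)%N : nat) =
  \sum_(a in R) \sum_(a' in R) ((a < a')%N : nat))%N by rewrite exchange_big.
rewrite mul2n -addnn -{2}Hx -Hs.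
rewrite -sum_nat_const; apply: leq_sum => a _.
rewrite -sum1_card; apply: leq_sum => a' _.
by case: (ltngtP a a').
Qed.

Lemma per_f n (A : {set 'I_n}) (f : nat -> nat) be d (p : {poly 'F_2}) :
  (#|Rset A f be| <= 2 ^ be)%N -> (5 + 2 * be <= d)%N -> irreducible_poly p ->
  size p = d.+1 -> (n <= 2 ^ d)%N ->
  (64 * #|[set a2 : {ffun 'I_2 -> 'I_(2 ^ d)%N} |
            ~~ E3 A f (hfun p (5 + 2 * be) a2) be]| <= 2 ^ d * 2 ^ d)%N.
Proof.
move=> HR Hcd Hirr Hp Hn.
set c := (5 + 2 * be)%N; set R := Rset A f be.
pose Col (a a' : 'I_n) := [set a2 : {ffun 'I_2 -> 'I_(2 ^ d)%N} |
   hfun p c a2 a == hfun p c a2 a'].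
have Hcol : forall a a' : 'I_n, (a < a')%N -> (#|Col a a'| * 2 ^ c = 2 ^ d * 2 ^ d)%N.
  move=> a a' Hlt; apply: coll_count => //.
  - exact: leq_trans (ltn_ord a) Hn.
  - exact: leq_trans (ltn_ord a') Hn.
  - by rewrite neq_ltn Hlt.
set bad := [set a2 | _].
have Hsub : bad \subset \bigcup_(a in R) \bigcup_(a' | (a' \in R) && (a < a')%N) Col a a'.
  apply/subsetP => a2; rewrite inE; apply: contraR => Hn'.
  apply/forall_inP => a Ha; apply/forall_inP => a' Ha'; apply/implyP => Hne.
  apply/negP => Heq; move/negP: Hn'; apply.
  case: (ltngtP a a') => Hlt.
  - apply/bigcupP; exists a => //; apply/bigcupP; exists a'; first by rewrite Ha' Hlt.
    by rewrite inE.
  - apply/bigcupP; exists a' => //; apply/bigcupP; exists a; first by rewrite Ha Hlt.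
    by rewrite inE eq_sym.
  - by move: Hne; rewrite (val_inj Hlt) eqxx.
have H1 : (#|bad| <= \sum_(a in R) \sum_(a' | (a' \in R) && (a < a')%N) #|Col a a'|)%N.
  apply: leq_trans (subset_leq_card Hsub) _.
  apply: leq_trans (card_bigcup_le _ _ _ _) _; apply: leq_sum => a _.
  exact: card_bigcup_le.
have H2 : (#|bad| * 2 ^ c <= (2 ^ d * 2 ^ d) *
            \sum_(a in R) \sum_(a' | (a' \in R) && (a < a')%N) 1)%N.
  apply: leq_trans (leq_mul H1 (leqnn _)) _.
  rewrite big_distrl big_distrr /=; apply: leq_sum => a _.
  rewrite big_distrl big_distrr /=; apply: leq_sum => a' /andP [_ Hlt].
  by rewrite Hcol // muln1.
have H3 := @pairs_le n R.
set X := (\sum_(a in R) _)%N in H2 H3.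
have Hc : (2 ^ c = 32 * (2 ^ be * 2 ^ be))%N by rewrite /c expnD -[in RHS]expnD addnn -mul2n.
set b := (2 ^ be)%N in HR Hc.
have Hb : (0 < b * b)%N by rewrite muln_gt0 expn_gt0.
rewrite -(leq_pmul2r Hb).
have H4 : (#|R| * #|R| <= b * b)%N by exact: leq_mul.
set N := (2 ^ d * 2 ^ d)%N in H2 *.
rewrite Hc in H2.
nia.
Qed.

Lemma R_bound (R : realType) (eps : R) n (A : {set 'I_n}) (f : nat -> nat) be :
  0 < eps -> eps < 1 -> E1 R A f be -> E2 eps A f be -> (#|Rset A f be| <= 2 ^ be)%N.
Proof.
move=> He0 He1 /andP [_ Hv] Hu.
set t := Defs.tval A f be in Hv; set s := Defs.sval A f be in Hu.
set u := (2 : R) ^ (- s) * #|A|%:R in Hu.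
set v := (2 : R) ^ (- t) * #|A|%:R in Hv.
have Hst : t <= s by rewrite /s /Defs.sval le_max lexx orbT.
have Huv : u <= v.
  by rewrite /u /v ler_wpM2r // ler_weXz2l // ?lerN2 // ler1n.
have Hu0 : 0 <= u by rewrite /u mulr_ge0 // exprz_ge0.
have H2 : (2 : R) ^ (- 1%:Z) = 1 / 2 by rewrite exprN1 div1r.
rewrite H2 in Hv.
move: Hu; rewrite /E2 -/s -/u ler_norml => /andP [_ Hu].
have : (#|Rset A f be|%:R : R) < (2 ^ be)%N%:R.
  have HB0 : (0 : R) < (2 ^ be)%N%:R by rewrite ltr0n expn_gt0.
  move: Hu Hv Huv Hu0 HB0; rewrite /v.
  move: (#|Rset A f be|%:R : R) ((2 ^ be)%N%:R : R) u ((2 : R) ^ (- t) * #|A|%:R) => r B uu vv.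
  move=> K1 K2 K3 K4 K5; clear -K1 K2 K3 K4 K5 He0 He1; nra.
by rewrite ltr_nat => /ltnW.
Qed.

Lemma card_pair_sum (T1 T2 : finType) (P : T1 -> T2 -> bool) :
  #|[set u : T1 * T2 | P u.1 u.2]| = (\sum_(a1 : T1) #|[set a2 | P a1 a2]|)%N.
Proof.
rewrite -sum1_card.
transitivity (\sum_(a1 : T1) \sum_(a2 | P a1 a2) 1)%N; last first.
  by apply: eq_bigr => a1 _; rewrite -sum1_card; apply: eq_bigl => a2; rewrite inE.
rewrite pair_big_dep /=; apply: eq_bigl => u; by rewrite inE.
Qed.

Lemma card_prod3 (T1 T2 T3 : finType) (P : T1 -> T2 -> bool) (K : nat) :
  (forall a1, 64 * #|[set a2 | P a1 a2]| <= K)%N ->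
  (64 * #|[set psi : (T1 * T2) * T3 | P psi.1.1 psi.1.2]| <= #|T1| * K * #|T3|)%N.
Proof.
move=> HK.
have -> : [set psi : (T1 * T2) * T3 | P psi.1.1 psi.1.2] =
          setX [set u : T1 * T2 | P u.1 u.2] [set: T3].
  by apply/setP => [[u w]]; rewrite !inE andbT.
rewrite cardsX cardsT mulnA; apply: leq_mul => //.
rewrite card_pair_sum big_distrr /= -sum_nat_const.
by apply: leq_sum => a1 _.
Qed.

Theorem lemma11 (R : realType) (n : nat) (eps : R) (d1 d2 d3 : nat)
  (p1 p2 p3 : {poly 'F_2}) (A : {set 'I_n}) :
  (1 <= n)%N -> 0 < eps -> eps < 1 ->
  irreducible_poly p1 -> size p1 = d1.+1 -> (n <= 2 ^ d1)%N ->
  irreducible_poly p2 -> size p2 = d2.+1 -> (n <= 2 ^ d2)%N ->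
  (5 + 2 * bexp eps <= d2)%N ->
  irreducible_poly p3 -> size p3 = d3.+1 -> (2 ^ 5 * bpar eps ^ 2 <= 2 ^ d3)%N ->
  (bexp eps <= d3)%N ->
  A != set0 ->
  prob_bad eps A d1 d2 d3 p1 p2 p3 <= (2 : R) ^ (- 6%:Z).
Proof.
move=> Hn He0 He1 _ _ _ Hirr Hp2 Hn2 Hd2 _ _ _ _ _.
rewrite /prob_bad /=.
set be := bexp eps.
pose P := fun (a1 : {ffun 'I_2 -> 'I_(2 ^ d1)%N}) (a2 : {ffun 'I_2 -> 'I_(2 ^ d2)%N}) =>
  [&& E1 R A (gfun p1 a1) be, E2 eps A (gfun p1 a1) be &
      ~~ E3 A (gfun p1 a1) (hfun p2 (5 + 2 * be) a2) be].
have HK : forall a1, (64 * #|[set a2 | P a1 a2]| <= 2 ^ d2 * 2 ^ d2)%N.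
  move=> a1; case: (boolP (E1 R A (gfun p1 a1) be && E2 eps A (gfun p1 a1) be)).
    move=> /andP [H1 H2].
    have HH := @per_f n A (gfun p1 a1) be d2 p2 (@R_bound R eps n A (gfun p1 a1) be He0 He1 H1 H2) Hd2 Hirr Hp2 Hn2.
    apply: leq_trans HH.
    rewrite leq_mul2l; apply/orP; right; apply: subset_leq_card.
    by apply/subsetP => a2; rewrite !inE /P H1 H2.
  move=> Hn12; have -> : [set a2 | P a1 a2] = set0.
    apply/setP => a2; rewrite !inE /P; apply/negP => /and3P [H1 H2 _].
    by move: Hn12; rewrite H1 H2.
  by rewrite cards0.
have Hc := @card_prod3 _ _ {ffun 'I_(kpar eps) -> 'I_(2 ^ d3)%N} _ _ HK.
rewrite !card_ffun !card_ord in Hc.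
rewrite !card_prod !card_ffun !card_ord.
move: Hc.
set X := #|[set psi | _]|.
set N := ((2 ^ d1) ^ 2 * (2 ^ d2 * 2 ^ d2) * (2 ^ d3) ^ kpar eps)%N.
move=> Hc.
have HN : (0 < N)%N by rewrite /N !muln_gt0 !expn_gt0.
rewrite -exprnN ler_pdivrMr ?ltr0n //.
have : ((64 * X)%N%:R <= N%:R :> R) by rewrite ler_nat.
rewrite natrM.
have -> : (2 : R) ^+ 6 = 64 by rewrite -natrX.
move=> H; clear -H; lra.
Qed.
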